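(* Let $K^{(1)},K^{(2)}$ be independent fractal percolations on $I=[0,1]$ with the same parameters $M\in\mathbb{N}_{\geq2}$ and $p\in(0,1]$, with construction steps $K_n^{(i)}$, and let $D_n^{(i)}:=\overline{I\setminus K_n^{(i)}}$. Then for any $n\in\mathbb{N}_0$, $$\mathbb{E}V_1(D_n^{(1)}\cap D_n^{(2)})=1-2\mathbb{E}V_1(K_n^{(1)})+\mathbb{E}V_1(K_n^{(1)}\cap K_n^{(2)}),$$ $$\mathbb{E}V_0(D_n^{(1)}\cap D_n^{(2)})=2\mathbb{E}V_0(K_n^{(1)})-\mathbb{E}V_0(K_n^{(1)}\cap K_n^{(2)})+\mathbb{E}N(K_n^{(1)}\cap K_n^{(2)})+1-4p^n+2p^{2n}.$$ Moreover, $\mathbb{E}V_1(D_n^{(1)})=1-\mathbb{E}V_1(K_n^{(1)})$ and $\mathbb{E}V_0(D_n^{(1)})=\mathbb{E}V_0(K_n^{(1)})+1-2p^n$.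
   Context: Fractal percolation on $[0,1]$: $K_0=[0,1]$; given $K_{n-1}$, a union of closed grid intervals of length $M^{-(n-1)}$, each is divided into $M$ closed subintervals of length $M^{-n}$, each kept independently (of everything else) with probability $p$; $K_n$ is the union of kept subintervals. $\overline{A}$ denotes closure; $V_1$ is length, $V_0$ the number of connected components, and $N(A)$ the number of isolated points of $A$. *)

(* Defs.v *)
From HB Require Import structures.
From mathcomp Require Import all_boot all_order all_algebra.
From mathcomp Require Import finmap all_classical all_reals all_analysis.
Set Implicit Arguments. Unset Strict Implicit. Unset Printing Implicit Defensive.
Import Order.TTheory GRing.Theory Num.Theory.
Import numFieldNormedType.Exports.
Local Open Scope classical_set_scope.
Local Open Scope ring_scope.

(* Random keep-bits of fractal percolation up to step n:
   a bit for every grid interval of every level k+1 (k < n);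
   grid interval a of level k+1 is [a/M^(k+1), (a+1)/M^(k+1)], a < M^(k+1). *)
Definition cell (n M : nat) := {k : 'I_n & 'I_(M ^ k.+1)}.
Definition config (n M : nat) := {ffun cell n M -> bool}.

(* the interval j of level n (j < M^n) is kept in K_n iff all its ancestors
   (at levels 1..n, including itself) have bit true *)
Definition kept (n M : nat) (b : config n M) (j : nat) : bool :=
  [forall x : cell n M,
     (val (tagged x) == j %/ M ^ (n - (tag x).+1))%N ==> b x].

Definition Kn {R : realType} (n M : nat) (b : config n M) : set R :=
  [set x : R | exists j : nat, [/\ (j < M ^ n)%N, kept b j,
      j%:R / (M ^ n)%:R <= x & x <= j.+1%:R / (M ^ n)%:R]].

Definition Dn {R : realType} (n M : nat) (b : config n M) : set R :=
  closure (`[0, 1]%classic `\` Kn b).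

Definition prob {R : realType} (n M : nat) (p : R) (b : config n M) : R :=
  \prod_(x : cell n M) (if b x then p else 1 - p).

Definition Exp {R : realType} (n M : nat) (p : R) (X : config n M -> R) : R :=
  \sum_(b : config n M) prob p b * X b.

Definition Exp2 {R : realType} (n M : nat) (p : R)
    (X : config n M -> config n M -> R) : R :=
  \sum_(b1 : config n M) \sum_(b2 : config n M)
     prob p b1 * prob p b2 * X b1 b2.

Definition V1 {R : realType} (A : set R) : R := fine (lebesgue_measure A).

Definition components {R : realType} (A : set R) : set (set R) :=
  [set connected_component A x | x in A].

Definition V0 {R : realType} (A : set R) : nat := (#|` fset_set (components A)|)%fset.

Definition isolated_points {R : realType} (A : set R) : set R :=
  [set x | A x /\ exists U, nbhs x U /\ A `&` U = [set x]].

Definition Niso {R : realType} (A : set R) : nat :=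
  (#|` fset_set (isolated_points A)|)%fset.

(* Main.v *)
Require Import Defs.
From HB Require Import structures.
From mathcomp Require Import all_boot all_order all_algebra.
From mathcomp Require Import finmap all_classical all_reals all_analysis.
From mathcomp Require Import ring lra zify.
Import Order.TTheory GRing.Theory Num.Theory.
Import numFieldNormedType.Exports.
Local Open Scope classical_set_scope.
Local Open Scope ring_scope.

Definition gp (R : realType) (N i : nat) : R := i%:R / N%:R.

Lemma ltg (R : realType) N i j : (0 < N)%N -> (gp R N i < gp R N j) = (i < j)%N.
Proof. by move=> hN; rewrite /gp ltr_pM2r ?ltr_nat // invr_gt0 ltr0n. Qed.

Lemma leg (R : realType) N i j : (0 < N)%N -> (gp R N i <= gp R N j) = (i <= j)%N.
Proof. by move=> hN; rewrite /gp ler_pM2r ?ler_nat // invr_gt0 ltr0n. Qed.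

Lemma gp_inj (R : realType) N i j : (0 < N)%N -> gp R N i = gp R N j -> i = j.
Proof.
move=> hN e; apply/eqP; rewrite eqn_leq -(leg R N i j hN) -(leg R N j i hN) e.
by rewrite lexx.
Qed.

Lemma cell_uniq (R : realType) N i j (x : R) : (0 < N)%N ->
  gp R N i < x < gp R N i.+1 -> gp R N j < x < gp R N j.+1 -> i = j.
Proof.
move=> hN /andP[h1 h2] /andP[h3 h4].
have : gp R N i < gp R N j.+1 by apply: lt_trans h4.
have : gp R N j < gp R N i.+1 by apply: lt_trans h2.
rewrite !ltg // !ltnS => a b; apply/eqP; rewrite eqn_leq a b.
by [].
Qed.

Lemma pt_notcell (R : realType) N i j : (0 < N)%N ->
  ~ (gp R N j < gp R N i < gp R N j.+1).
Proof.
move=> hN /andP[]; rewrite !ltg // ltnS => a b.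
by move: (leq_trans a b); rewrite ltnn.
Qed.

Arguments pt_notcell {R N i j}.
Arguments cell_uniq {R N i j x}.
Arguments gp_inj {R N i j}.

Definition gset (R : realType) N (pt cl : nat -> bool) : set R :=
  [set x | (exists i, [/\ (i <= N)%N, pt i & x = gp R N i]) \/
           (exists i, [/\ (i < N)%N, cl i & gp R N i < x < gp R N i.+1])].

Definition Uc (R : realType) N (a : nat -> bool) : set R :=
  [set y | exists j : nat, [/\ (j < N)%N, a j, gp R N j <= y & y <= gp R N j.+1]].

Lemma Kn_Uc (R : realType) n M (b : config n M) : Kn b = Uc R (M ^ n) (kept b).
Proof. by []. Qed.

Definition ptK N (a : nat -> bool) i := ((0 < i)%N && a i.-1) || ((i < N)%N && a i).

Lemma Uc_gset (R : realType) N a : (0 < N)%N -> Uc R N a = gset R N (ptK N a) a.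
Proof.
move=> hN; apply/seteqP; split => y.
- case=> j [jN aj]; rewrite le_eqVlt => /orP[/eqP <-|h1].
    by move=> _; left; exists j; split; rewrite ?(ltnW jN) // /ptK jN aj orbT.
  rewrite le_eqVlt => /orP[/eqP ->|h2].
    by left; exists j.+1; split => //; rewrite /ptK /= aj.
  by right; exists j; split => //; rewrite h1 h2.
- case=> [[i [iN /orP[/andP[i0 ai]|/andP[iN' ai]] ->]]|[i [iN ai /andP[h1 h2]]]].
  + exists i.-1; rewrite prednK //; split => //; rewrite leg //; lia.
  + by exists i; split => //; rewrite leg.
  + by exists i; split => //; apply: ltW.
Qed.

Lemma gsetI (R : realType) N pt cl pt' cl' : (0 < N)%N ->
  gset R N pt cl `&` gset R N pt' cl' =
  gset R N (fun i => pt i && pt' i) (fun i => cl i && cl' i).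
Proof.
move=> hN; apply/seteqP; split => y.
- case=> [[[i [iN pi ->]]|[i [iN ci hi]]] [[i' [iN' pi' e]]|[i' [iN' ci' hi']]]].
  + by move: (gp_inj hN e) => {}e; subst i'; left; exists i; rewrite pi pi'.
  + by exfalso; exact: (pt_notcell hN hi').
  + by exfalso; rewrite e in hi; exact: (pt_notcell hN hi).
  + by have e := cell_uniq hN hi hi'; subst i'; right; exists i; rewrite ci ci'.
- case=> [[i [iN /andP[p p'] ->]]|[i [iN /andP[c c'] hi]]].
  + by split; left; exists i.
  + by split; right; exists i.
Qed.

Lemma gp0 (R : realType) N : gp R N 0 = 0.
Proof. by rewrite /gp mul0r. Qed.

Lemma gpN (R : realType) N : (0 < N)%N -> gp R N N = 1.
Proof. by move=> hN; rewrite /gp divff // pnatr_eq0 -lt0n. Qed.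

Lemma Uc_bigcup (R : realType) N a :
  Uc R N a = \bigcup_(j in [set j | (j < N)%N /\ a j])
                [set y : R | gp R N j <= y <= gp R N j.+1].
Proof.
apply/seteqP; split => y.
- by case=> j [jN aj h1 h2]; exists j => //=; rewrite h1 h2.
- by case=> j /= [jN aj] /andP[h1 h2]; exists j.
Qed.

Lemma Uc_closed (R : realType) N a : closed (Uc R N a).
Proof.
rewrite Uc_bigcup; apply: closed_bigcup.
  by apply: sub_finite_set (finite_II N) => j [].
move=> j _.
have -> : [set y : R | gp R N j <= y <= gp R N j.+1] = `[gp R N j, gp R N j.+1]%classic.
  by apply/seteqP; split => y /=; rewrite in_itv.
exact: itv_closed.
Qed.

Lemma exists_cell (R : realType) N (y : R) : (0 < N)%N -> 0 <= y <= 1 ->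
  exists j, [/\ (j < N)%N, gp R N j <= y & y <= gp R N j.+1].
Proof.
move=> hN /andP[y0 y1].
suff: forall k, (0 < k <= N)%N -> y <= gp R N k ->
   exists j, [/\ (j < k)%N, gp R N j <= y & y <= gp R N j.+1].
  move=> /(_ N); rewrite hN leqnn gpN // => /(_ isT y1) [j [jN h1 h2]].
  by exists j.
elim=> [//|k IH /andP[_ kN] yk].
case: (posnP k) => [k0|kpos].
  by exists 0%N; split => //; rewrite ?gp0 // -k0.
case: (leP y (gp R N k)) => [yk'|yk'].
  have kN' : (0 < k <= N)%N by rewrite kpos ltnW.
  have [j [jk h1 h2]] := IH kN' yk'.
  by exists j; split => //; apply: ltn_trans jk _.
by exists k; split => //; apply: ltW.
Qed.

Lemma closure_itv_sub (R : realType) (a b : R) : a < b ->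
  [set y | a <= y <= b] `<=` closure [set y | a < y < b].
Proof.
move=> ab y /andP[ay yb] B /nbhs_ballP [e /= e0 Be].
case: (ltP y b) => [yb'|by'].
- have [d [d0 de db]] : exists d, [/\ 0 < d, d < e & d < b - y].
    by case: (ltP e (b - y)) => h; [exists (e / 2) | exists ((b - y) / 2)]; split; lra.
  exists (y + d); split; first by apply/andP; split; lra.
  apply: Be; rewrite -ball_normE /=.
  have -> : y - (y + d) = - d by ring.
  by rewrite normrN gtr0_norm.
- have [d [d0 de db]] : exists d, [/\ 0 < d, d < e & d < b - a].
    by case: (ltP e (b - a)) => h; [exists (e / 2) | exists ((b - a) / 2)]; split; lra.
  exists (y - d); split; first by apply/andP; split; lra.
  apply: Be; rewrite -ball_normE /=.
  have -> : y - (y - d) = d by ring.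
  by rewrite gtr0_norm.
Qed.

Lemma closure_Uc (R : realType) N a : (0 < N)%N ->
  closure (`[0, 1]%classic `\` Uc R N a) = Uc R N (fun j => ~~ a j).
Proof.
move=> hN; apply/seteqP; split.
- have E := (closure_id _).1 (Uc_closed R N (fun j => ~~ a j)).
  rewrite [X in _ `<=` X]E; apply: closureS => y [].
  rewrite /= in_itv /= => y01 nU.
  have [j [jN h1 h2]] := exists_cell R N y hN y01.
  exists j; split => //; apply/negP => aj; apply: nU; by exists j.
- move=> y [j [jN naj h1 h2]].
  have lt : gp R N j < gp R N j.+1 by rewrite ltg.
  have := @closure_itv_sub R _ _ lt y; rewrite /= h1 h2 => /(_ isT).
  apply: closureS => z /andP[z1 z2]; split.
    rewrite /= in_itv /=; apply/andP; split.
      by apply: le_trans (ltW z1); rewrite -(gp0 R N) leg.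
    by apply: (le_trans (ltW z2)); rewrite -(gpN R N hN) leg.
  case=> k [kN ak k1 k2].
  have : gp R N k < gp R N j.+1 by apply: le_lt_trans k1 z2.
  have : gp R N j < gp R N k.+1 by apply: lt_le_trans z1 k2.
  rewrite !ltg // !ltnS => jk kj.
  have ekj : k = j by apply/eqP; rewrite eqn_leq jk kj.
  by move: naj; rewrite -ekj ak.
Qed.

Lemma V1_gset (R : realType) N pt cl : (0 < N)%N ->
  V1 (gset R N pt cl) = \sum_(i < N) (cl i)%:R / N%:R.
Proof.
move=> hN.
pose F := fun i : nat => if cl i then [set y : R | gp R N i < y < gp R N i.+1] else set0.
pose P := [set y : R | exists i, [/\ (i <= N)%N, pt i & y = gp R N i]].
have E : gset R N pt cl = (\big[setU/set0]_(i < N) F i) `|` P.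
  rewrite -bigcup_mkord; apply/seteqP; split => y.
  - case=> [h|[i [iN ci h]]]; first by right.
    by left; exists i => //; rewrite /F ci.
  - case; last by move=> h; left.
    case=> i /= iN; rewrite /F; case: ifP => ci // h.
    by right; exists i.
have mF : forall k, measurable (F k).
  move=> k; rewrite /F; case: ifP => _ //.
  have -> : [set y : R | gp R N k < y < gp R N k.+1] = `]gp R N k, gp R N k.+1[%classic.
    by apply/seteqP; split => y /=; rewrite in_itv.
  exact: measurable_itv.
have tF : trivIset setT F.
  move=> i j _ _ [y []]; rewrite /F.
  case: ifP => // _ hi; case: ifP => // _ hj.
  exact: (cell_uniq hN hi hj).
have cP : countable P.
  apply: finite_set_countable.
  apply: (sub_finite_set (B := [set gp R N i | i in `I_N.+1])).
    by move=> y [i [iN _ ->]]; exists i.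
  exact: finite_image (finite_II _).
have mP : measurable P.
  by apply: countable_measurable cP => t; exact: measurable_set1.
rewrite /V1 E measureU0 //; last exact: countable_lebesgue_measure0.
rewrite measure_bigsetU //.
have -> : \sum_(i < N) lebesgue_measure (F i) = \sum_(i < N) ((cl i)%:R / N%:R : R)%:E.
  apply: eq_bigr => i _; rewrite /F; case: ifP => ci.
    have -> : [set y : R | gp R N i < y < gp R N i.+1] = `]gp R N i, gp R N i.+1[%classic.
      by apply/seteqP; split => y /=; rewrite in_itv.
    rewrite lebesgue_measure_itv /= lte_fin (ltg R N i i.+1 hN) ltnSn.
    by rewrite -EFinD /gp -mulrBl -natrB // subSnn.
  by rewrite measure0 mul0r.
  by rewrite sumEFin.
by apply: bigsetU_measurable => k _; apply: mF.
Qed.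

Lemma card_fset_nat (P : nat -> bool) K :
  #|` fset_set [set i : nat | (i < K)%N /\ P i]|%fset = (\sum_(i < K) P i)%N.
Proof.
elim: K => [|K IH].
  rewrite big_ord0 (_ : [set i : nat | _] = set0) ?fset_set0 //.
  by apply/seteqP; split => i //= [].
rewrite big_ord_recr /=.
have fin : finite_set [set i : nat | (i < K)%N /\ P i].
  by apply: sub_finite_set (finite_II K) => i [].
case: (boolP (P K)) => PK.
  rewrite (_ : [set i : nat | _] = K |` [set i : nat | (i < K)%N /\ P i]).
    rewrite fset_setU1 // cardfsU1 IH in_fset_set //.
    have -> : (K \notin [set i : nat | (i < K)%N /\ P i]) = true.
      by apply/negP => /set_mem []; rewrite ltnn.
    by rewrite addnC.
  apply/seteqP; split => i /=.
    by rewrite ltnS leq_eqVlt => -[/orP[/eqP ->|iK] Pi]; [left|right].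
  by case=> [->|[iK Pi]]; split => //; apply: ltnW.
rewrite addn0 -IH; congr (#|` fset_set _|)%fset.
apply/seteqP; split => i /=.
  rewrite ltnS leq_eqVlt => -[/orP[/eqP ->|iK] Pi] //.
  by rewrite Pi in PK.
by case=> iK Pi; split => //; apply: ltnW.
Qed.

Lemma card_fset_image (T U : choiceType) (f : T -> U) (S : set T) :
  finite_set S -> {in S &, injective f} ->
  #|` fset_set (f @` S)|%fset = #|` fset_set S|%fset.
Proof.
move=> fS inj; rewrite fset_set_image //; apply/eqP/card_in_imfsetP.
move=> x y; rewrite !in_fset_set // => xS yS; apply: inj => //.
Qed.

Lemma interval_connected (R : realType) (a b : R) : connected [set y | a <= y <= b].
Proof.
apply/connected_intervalP => x y /andP[ax xb] /andP[ay yb] z /andP[xz zy].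
by apply/andP; split; [apply: le_trans xz|apply: le_trans yb].
Qed.

Definition st (pt cl : nat -> bool) i := pt i && ~~ ((0 < i)%N && cl i.-1).

Definition gclosed N (pt cl : nat -> bool) :=
  forall i, (i < N)%N -> cl i -> pt i && pt i.+1.

Lemma cell_cc (R : realType) N pt cl j : (0 < N)%N -> gclosed N pt cl ->
  (j < N)%N -> cl j -> forall y : R, gp R N j <= y <= gp R N j.+1 ->
  connected_component (gset R N pt cl) (gp R N j) y.
Proof.
move=> hN hc jN cj y hy.
have /andP[pj pj1] := hc j jN cj.
apply: (connected_component_max (B := [set y : R | gp R N j <= y <= gp R N j.+1])); last exact: hy.
- by apply/andP; split => //; rewrite leg.
- move=> z /andP[]; rewrite le_eqVlt => /orP[/eqP <-|h1].
    by move=> _; left; exists j; split => //; apply: ltnW.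
  rewrite le_eqVlt => /orP[/eqP ->|h2].
    by left; exists j.+1.
  by right; exists j; split => //; rewrite h1 h2.
- exact: interval_connected.
Qed.

Lemma gset_pt (R : realType) N (pt cl : nat -> bool) i : (i <= N)%N -> pt i -> gset R N pt cl (gp R N i).
Proof. by move=> iN pi; left; exists i. Qed.

Lemma start_cc (R : realType) N pt cl : (0 < N)%N -> gclosed N pt cl ->
  forall i, (i <= N)%N -> pt i -> exists s, [/\ (s <= i)%N, st pt cl s &
    connected_component (gset R N pt cl) (gp R N s) (gp R N i)].
Proof.
move=> hN hc; elim=> [|i IH] iN pi.
  exists 0%N; split => //; first by rewrite /st pi.
  by apply: connected_component_refl; apply: gset_pt.
case: (boolP (cl i)) => ci; last first.
  exists i.+1; split => //; first by rewrite /st pi /= ci.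
  by apply: connected_component_refl; apply: gset_pt.
have /andP[pi' _] := hc i iN ci.
have [s [si ss cs]] := IH (ltnW iN) pi'.
exists s; split => //; first by apply: leq_trans si _.
apply: connected_component_trans cs _.
apply: cell_cc => //.
by apply/andP; split => //; rewrite leg.
Qed.

Lemma all_cc (R : realType) N pt cl : (0 < N)%N -> gclosed N pt cl ->
  forall x, gset R N pt cl x -> exists s, [/\ (s <= N)%N, st pt cl s &
    connected_component (gset R N pt cl) (gp R N s) x].
Proof.
move=> hN hc x [[i [iN pi ->]]|[i [iN ci /andP[h1 h2]]]].
  have [s [si ss cs]] := @start_cc R N pt cl hN hc _ iN pi.
  by exists s; split => //; apply: leq_trans si iN.
have /andP[pi _] := hc i iN ci.
have [s [si ss cs]] := @start_cc R N pt cl hN hc _ (ltnW iN) pi.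
exists s; split => //; first by apply: leq_trans si (ltnW iN).
apply: connected_component_trans cs _.
by apply: cell_cc => //; rewrite (ltW h1) (ltW h2).
Qed.

Lemma no_cc (R : realType) N pt cl s s' : (0 < N)%N -> gclosed N pt cl ->
  (s < s')%N -> (s' <= N)%N -> pt s -> st pt cl s' ->
  ~ connected_component (gset R N pt cl) (gp R N s) (gp R N s').
Proof.
move=> hN hc ss' s'N ps /andP[ps' ncl] C.
have s'0 : (0 < s')%N by apply: leq_ltn_trans ss'.
have /connected_intervalP iC := @component_connected _ (gset R N pt cl) (gp R N s).
pose z := (gp R N s'.-1 + gp R N s') / 2.
have lt1 : gp R N s'.-1 < gp R N s' by rewrite ltg // prednK.
have hz1 : gp R N s'.-1 < z by rewrite /z; lra.
have hz2 : z < gp R N s' by rewrite /z; lra.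
have Cz : connected_component (gset R N pt cl) (gp R N s) z.
  apply: (iC (gp R N s) (gp R N s')) => //.
    by apply: connected_component_refl; apply: gset_pt => //; apply: ltnW (leq_trans ss' s'N).
  rewrite (ltW hz2) andbT; apply: le_trans (ltW hz1).
  by rewrite leg // -ltnS prednK.
have := connected_component_sub Cz.
case=> [[j [jN pj ez]]|[j [jN cj hj]]].
  have : gp R N s'.-1 < gp R N j < gp R N s'.-1.+1.
    by rewrite -ez prednK // hz1 hz2.
  by move/pt_notcell => /(_ hN).
have : gp R N s'.-1 < z < gp R N s'.-1.+1 by rewrite prednK // hz1 hz2.
move/(cell_uniq hN hj) => ej; subst j.
by move: ncl; rewrite s'0 cj.
Qed.

Lemma V0_gset (R : realType) N pt cl : (0 < N)%N -> gclosed N pt cl ->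
  V0 (gset R N pt cl) = (\sum_(i < N.+1) st pt cl i)%N.
Proof.
move=> hN hc.
set A := gset R N pt cl.
pose S := [set s : nat | (s < N.+1)%N /\ st pt cl s].
have finS : finite_set S by apply: sub_finite_set (finite_II N.+1) => i [].
have E : components A = (fun s => connected_component A (gp R N s)) @` S.
  apply/seteqP; split => C.
    case=> x Ax <-; have [s [sN ss cs]] := @all_cc R N pt cl hN hc _ Ax.
    by exists s => //; apply: same_connected_component.
  case=> s [sN ss] <-; exists (gp R N s) => //.
  by apply: gset_pt => //; case/andP: ss.
rewrite /V0 E card_fset_image // ?card_fset_nat //.
move=> s s' /set_mem [sN ss] /set_mem [s'N ss'] e.
have ps : pt s by case/andP: ss.
have ps' : pt s' by case/andP: ss'.
case: (ltngtP s s') => // h.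
- exfalso; apply: (@no_cc R N pt cl _ _ hN hc h s'N ps ss').
  by rewrite e; apply: connected_component_refl; apply: gset_pt.
- exfalso; apply: (@no_cc R N pt cl _ _ hN hc h sN ps' ss).
  by rewrite -e; apply: connected_component_refl; apply: gset_pt.
Qed.

Definition isoP N (pt cl : nat -> bool) i :=
  pt i && ~~ ((0 < i)%N && cl i.-1) && ~~ ((i < N)%N && cl i).

Lemma gpS (R : realType) N j : gp R N j.+1 = gp R N j + N%:R^-1.
Proof. by rewrite /gp -natr1 mulrDl mul1r. Qed.

Lemma near_open (R : realType) (a b x e : R) : a < b -> a <= x <= b -> 0 < e ->
  exists y, [/\ a < y < b, y != x & `|x - y| < e].
Proof.
move=> ab /andP[ax xb] e0.
case: (ltP x b) => [xb'|bx].
- have [d [d0 de db]] : exists d, [/\ 0 < d, d < e & d < b - x].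
    by case: (ltP e (b - x)) => h; [exists (e / 2) | exists ((b - x) / 2)]; split; lra.
  exists (x + d); split.
  + by apply/andP; split; lra.
  + by apply/eqP => h; lra.
  + have -> : x - (x + d) = - d by ring.
    by rewrite normrN gtr0_norm.
- have [d [d0 de db]] : exists d, [/\ 0 < d, d < e & d < b - a].
    by case: (ltP e (b - a)) => h; [exists (e / 2) | exists ((b - a) / 2)]; split; lra.
  exists (x - d); split.
  + by apply/andP; split; lra.
  + by apply/eqP => h; lra.
  + have -> : x - (x - d) = d by ring.
    by rewrite gtr0_norm.
Qed.

Lemma iso_gset (R : realType) N pt cl : (0 < N)%N -> gclosed N pt cl ->
  isolated_points (gset R N pt cl) =
  gp R N @` [set i : nat | (i < N.+1)%N /\ isoP N pt cl i].
Proof.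
move=> hN hc; set A := gset R N pt cl.
apply/seteqP; split => x.
- case=> Ax [U [/nbhs_ballP [e /= e0 Ue] AU]].
  have H : forall j, (j < N)%N -> cl j -> gp R N j <= x <= gp R N j.+1 -> False.
    move=> j jN cj hx.
    have ab : gp R N j < gp R N j.+1 by rewrite ltg.
    have [y [hy yx xy]] := @near_open R _ _ _ _ ab hx e0.
    have : (A `&` U) y.
      split; first by right; exists j.
      by apply: Ue; rewrite -ball_normE.
    by rewrite AU => /= eyx; move: yx; rewrite eyx eqxx.
  case: Ax => [[i [iN pi ex]]|[i [iN ci /andP[h1 h2]]]]; last first.
    by exfalso; apply: (H i iN ci); rewrite (ltW h1) (ltW h2).
  exists i; last by rewrite ex.
  split => //; rewrite /isoP pi /=.
  apply/andP; split.
    apply/negP => /andP[h ch].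
    apply: (H i.-1 _ ch); first by rewrite prednK.
    by rewrite prednK // ex lexx andbT leg // leq_pred.
  apply/negP => /andP[h ch].
  apply: (H i h ch).
  by rewrite ex !leg // leqnn leqnSn.
- case=> i [iN /andP[/andP[pi nl] nr]] <-; split.
    by apply: gset_pt.
  have Ni : 0 < (N%:R : R)^-1 by rewrite invr_gt0 ltr0n.
  exists (ball (gp R N i) (N%:R^-1)); split; first exact: nbhsx_ballx.
  apply/seteqP; split => y; last first.
    by move=> ->; split; [apply: gset_pt | apply: ballxx].
  case=> Ay; rewrite -ball_normE /= => By.
  have : gp R N i - N%:R^-1 < y < gp R N i.+1.
    move: By; rewrite ltr_distlC gpS; lra.
  move=> /andP[y1 y2].
  case: Ay => [[j [jN pj ey]]|[j [jN cj /andP[h1 h2]]]].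
    rewrite ey in y1 y2 *; congr (gp R N _).
    move: y1 y2; rewrite ltrBlDr -gpS !ltg // !ltnS => a b.
    by apply/eqP; rewrite eqn_leq a b.
  exfalso.
  have ji : (j <= i)%N by rewrite -ltnS -(ltg R N _ _ hN); apply: lt_trans h1 y2.
  have ij : (i <= j.+1)%N.
    by rewrite -ltnS -(ltg R N _ _ hN) gpS -ltrBlDr; apply: lt_trans y1 h2.
  move: ji; rewrite leq_eqVlt => /orP[/eqP eji|lji].
    by move: nr; rewrite -eji jN cj.
  have eij : i = j.+1 by apply/eqP; rewrite eqn_leq ij lji.
  by move: nl; rewrite eij /= cj.
Qed.

Lemma Niso_gset (R : realType) N pt cl : (0 < N)%N -> gclosed N pt cl ->
  Niso (gset R N pt cl) = (\sum_(i < N.+1) isoP N pt cl i)%N.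
Proof.
move=> hN hc; rewrite /Niso iso_gset // card_fset_image ?card_fset_nat //.
  by apply: sub_finite_set (finite_II N.+1) => i [].
by move=> i j _ _; apply: gp_inj.
Qed.

Lemma sum_prob (R : realType) n M (p : R) : \sum_(b : config n M) prob p b = 1.
Proof.
rewrite /prob -(bigA_distr_bigA (fun (x : cell n M) (v : bool) => if v then p else 1 - p)) /=.
by rewrite big1 // => x _; rewrite big_bool /=; ring.
Qed.

Lemma forall_natr (R : realType) (T : finType) (P : pred T) :
  ([forall x, P x]%:R : R) = \prod_x (P x)%:R.
Proof.
case: (boolP [forall x, P x]) => h.
  by rewrite big1 // => x _; move/forallP: h => /(_ x) ->.
move: h; rewrite negb_forall => /existsP [x Px].
by rewrite (bigD1 x) //= (negbTE Px) mul0r.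
Qed.

Lemma card_anc n M j : (0 < M)%N -> (j < M ^ n)%N ->
  #|[pred x : cell n M | (val (tagged x) == j %/ M ^ (n - (tag x).+1))%N]| = n.
Proof.
move=> M0 jN.
have h : forall k : 'I_n, (j %/ M ^ (n - k.+1) < M ^ k.+1)%N.
  move=> k; rewrite ltn_divLR ?expn_gt0 ?M0 // -expnD.
  by rewrite subnKC // ltn_ord.
pose phi := fun k : 'I_n => (Tagged (fun k : 'I_n => 'I_(M ^ k.+1)) (Ordinal (h k)) : cell n M).
have injphi : injective phi by move=> k1 k2 /(congr1 tag).
rewrite -[RHS](card_ord n) -(card_imset _ injphi).
apply: eq_card => x; rewrite inE /=.
apply/idP/imsetP.
- case: x => k y /= /eqP hy; exists k => //.
  rewrite /phi; congr (Tagged _ _); apply: val_inj => /=; exact: hy.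
- by case=> k _ ->.
Qed.

Lemma Exp_kept (R : realType) n M (p : R) j : (0 < M)%N -> (j < M ^ n)%N ->
  Exp p (fun b : config n M => (kept b j)%:R) = p ^+ n.
Proof.
move=> M0 jN.
set anc := fun x : cell n M => (val (tagged x) == j %/ M ^ (n - (tag x).+1))%N.
have E : forall b : config n M, prob p b * (kept b j)%:R =
    \prod_x ((if b x then p else 1 - p) * (anc x ==> b x)%:R).
  by move=> b; rewrite /kept forall_natr /prob -big_split.
rewrite /Exp (eq_bigr _ (fun b _ => E b)) /=.
rewrite -(bigA_distr_bigA (fun (x : cell n M) (v : bool) =>
   (if v then p else 1 - p) * (anc x ==> v)%:R)) /=.
rewrite (eq_bigr (fun x => if anc x then p else 1)); last first.
  by move=> x _; rewrite big_bool /=; case: (anc x) => /=; ring.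
rewrite -big_mkcond /= prodr_const.
by rewrite card_anc.
Qed.

Lemma ExpD (R : realType) n M (p : R) (X Y : config n M -> R) :
  Exp p (fun b => X b + Y b) = Exp p X + Exp p Y.
Proof. by rewrite /Exp -big_split; apply: eq_bigr => b _; rewrite mulrDr. Qed.

Lemma ExpB (R : realType) n M (p : R) (X Y : config n M -> R) :
  Exp p (fun b => X b - Y b) = Exp p X - Exp p Y.
Proof. by rewrite /Exp -sumrB; apply: eq_bigr => b _; rewrite mulrBr. Qed.

Lemma ExpC (R : realType) n M (p : R) (c : R) :
  Exp p (fun b : config n M => c) = c.
Proof. by rewrite /Exp -big_distrl /= sum_prob mul1r. Qed.

Lemma Exp2D (R : realType) n M (p : R) (X Y : config n M -> config n M -> R) :
  Exp2 p (fun b1 b2 => X b1 b2 + Y b1 b2) = Exp2 p X + Exp2 p Y.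
Proof.
rewrite /Exp2 -big_split; apply: eq_bigr => b1 _.
by rewrite -big_split; apply: eq_bigr => b2 _; rewrite mulrDr.
Qed.

Lemma Exp2B (R : realType) n M (p : R) (X Y : config n M -> config n M -> R) :
  Exp2 p (fun b1 b2 => X b1 b2 - Y b1 b2) = Exp2 p X - Exp2 p Y.
Proof.
rewrite /Exp2 -sumrB; apply: eq_bigr => b1 _.
by rewrite -sumrB; apply: eq_bigr => b2 _; rewrite mulrBr.
Qed.

Lemma Exp2M (R : realType) n M (p : R) (X Y : config n M -> R) :
  Exp2 p (fun b1 b2 => X b1 * Y b2) = Exp p X * Exp p Y.
Proof.
rewrite /Exp2 /Exp big_distrl /=; apply: eq_bigr => b1 _.
by rewrite big_distrr /=; apply: eq_bigr => b2 _; ring.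
Qed.

Lemma Exp2l (R : realType) n M (p : R) (X : config n M -> R) :
  Exp2 p (fun b1 b2 => X b1) = Exp p X.
Proof.
have := @Exp2M R n M p X (fun _ => 1); rewrite (@ExpC R n M) mulr1 => <-.
by rewrite /Exp2; apply: eq_bigr => b1 _; apply: eq_bigr => b2 _; rewrite mulr1.
Qed.

Lemma Exp2r (R : realType) n M (p : R) (X : config n M -> R) :
  Exp2 p (fun b1 b2 => X b2) = Exp p X.
Proof.
have := @Exp2M R n M p (fun _ => 1) X; rewrite (@ExpC R n M) mul1r => <-.
by rewrite /Exp2; apply: eq_bigr => b1 _; apply: eq_bigr => b2 _; rewrite mul1r.
Qed.

Lemma Exp2C (R : realType) n M (p : R) (c : R) :
  Exp2 p (fun b1 b2 : config n M => c) = c.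
Proof. by rewrite Exp2l ExpC. Qed.

Lemma telesc (R : realType) N (f : nat -> bool) :
  \sum_(i < N.+1) (((i < N)%N && f i)%:R : R) =
  \sum_(i < N.+1) (((0 < i)%N && f i.-1)%:R : R).
Proof.
rewrite big_ord_recr big_ord_recl /= ltnn /= addr0 add0r.
by apply: eq_bigr => i _ /=; rewrite ltn_ord.
Qed.

Lemma bnd0 (R : realType) N : \sum_(i < N.+1) ((~~ (0 < i)%N)%:R : R) = 1.
Proof.
rewrite big_ord_recl /= big1 ?addr0 //.
Qed.

Lemma bnd0f (R : realType) N (f : nat -> bool) :
  \sum_(i < N.+1) ((~~ (0 < i)%N && f i)%:R : R) = (f 0%N)%:R.
Proof.
rewrite big_ord_recl /= big1 ?addr0 //.
Qed.

Lemma bndN (R : realType) N (f : nat -> bool) :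
  \sum_(i < N.+1) ((~~ (i < N)%N && f i.-1)%:R : R) = (f N.-1)%:R.
Proof.
rewrite big_ord_recr /= ltnn /= big1 ?add0r //.
by move=> i _ /=; rewrite ltn_ord.
Qed.

Lemma I3 (R : realType) N (a : nat -> bool) : (0 < N)%N ->
  ((\sum_(i < N.+1) st (ptK N (fun j => ~~ a j)) (fun j => ~~ a j) i)%N%:R : R) =
  (\sum_(i < N.+1) st (ptK N a) a i)%N%:R + 1 - (a 0%N)%:R - (a N.-1)%:R.
Proof.
move=> hN.
have key : forall i : 'I_N.+1,
  ((st (ptK N (fun j => ~~ a j)) (fun j => ~~ a j) i)%:R : R) =
  (st (ptK N a) a i)%:R + (~~ (0 < i)%N)%:R - (~~ (0 < i)%N && a i)%:R
  - (~~ (i < N)%N && a i.-1)%:R - ((i < N)%N && a i)%:R + ((0 < i)%N && a i.-1)%:R.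
  move=> i; have : (0 < i)%N || (i < N)%N.
    by case: i => [[|i]] //= _; rewrite hN.
  rewrite /st /ptK; case: (0 < i)%N; case: (i < N)%N; case: (a i.-1); case: (a i) => //= _; lra.
rewrite !natr_sum (eq_bigr _ (fun i _ => key i)) /=.
rewrite big_split /= !sumrB big_split /= telesc bnd0 bnd0f bndN.
lra.
Qed.

Lemma I4 (R : realType) N (a c : nat -> bool) : (0 < N)%N ->
  ((\sum_(i < N.+1) st (fun i => ptK N (fun j => ~~ a j) i && ptK N (fun j => ~~ c j) i)
                        (fun j => ~~ a j && ~~ c j) i)%N%:R : R) =
  (\sum_(i < N.+1) st (ptK N a) a i)%N%:R + (\sum_(i < N.+1) st (ptK N c) c i)%N%:R
  - (\sum_(i < N.+1) st (fun i => ptK N a i && ptK N c i) (fun j => a j && c j) i)%N%:R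
  + (\sum_(i < N.+1) isoP N (fun i => ptK N a i && ptK N c i) (fun j => a j && c j) i)%N%:R
  + 1 - (a 0%N)%:R - (c 0%N)%:R - (a N.-1)%:R - (c N.-1)%:R
  + (a 0%N && c 0%N)%:R + (a N.-1 && c N.-1)%:R.
Proof.
move=> hN.
have key : forall i : 'I_N.+1,
  ((st (fun i => ptK N (fun j => ~~ a j) i && ptK N (fun j => ~~ c j) i)
                        (fun j => ~~ a j && ~~ c j) i)%:R : R) =
  (st (ptK N a) a i)%:R + (st (ptK N c) c i)%:R
  - (st (fun i => ptK N a i && ptK N c i) (fun j => a j && c j) i)%:R
  + (isoP N (fun i => ptK N a i && ptK N c i) (fun j => a j && c j) i)%:R
  + (~~ (0 < i)%N)%:R - (~~ (0 < i)%N && a i)%:R - (~~ (0 < i)%N && c i)%:R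
  - (~~ (i < N)%N && a i.-1)%:R - (~~ (i < N)%N && c i.-1)%:R
  + (~~ (0 < i)%N && (a i && c i))%:R + (~~ (i < N)%N && (a i.-1 && c i.-1))%:R
  - ((i < N)%N && (a i || c i))%:R + ((0 < i)%N && (a i.-1 || c i.-1))%:R.
  move=> i; have : (0 < i)%N || (i < N)%N.
    by case: i => [[|i]] //= _; rewrite hN.
  rewrite /st /isoP /ptK; case: (0 < i)%N; case: (i < N)%N;
    case: (a i.-1); case: (a i); case: (c i.-1); case: (c i) => //= _; lra.
rewrite !natr_sum (eq_bigr _ (fun i _ => key i)) /=.
do 15 rewrite ?big_split ?sumrB ?sumrN /=.
have T1 := telesc R N (fun i => a i || c i); simpl in T1.
have T2 := bnd0f R N (fun i => a i && c i); simpl in T2.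
have T3 := bndN R N (fun i => a i && c i); simpl in T3.
rewrite T1 T2 T3 bnd0 (bnd0f R N a) (bnd0f R N c) (bndN R N a) (bndN R N c).
lra.
Qed.

Lemma gclosedK N (x : nat -> bool) : gclosed N (ptK N x) x.
Proof. by move=> i iN xi; rewrite /ptK /= iN xi /= orbT. Qed.

Lemma gclosedI N pt cl pt' cl' : gclosed N pt cl -> gclosed N pt' cl' ->
  gclosed N (fun i => pt i && pt' i) (fun i => cl i && cl' i).
Proof.
move=> h h' i iN /andP[c c'].
by case/andP: (h i iN c) => -> ->; case/andP: (h' i iN c') => -> ->.
Qed.

Lemma KE (R : realType) n M (b : config n M) : (0 < M ^ n)%N ->
  Kn b = gset R (M ^ n) (ptK (M ^ n) (kept b)) (kept b).
Proof. by move=> hN; rewrite Kn_Uc Uc_gset. Qed.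

Lemma DE (R : realType) n M (b : config n M) : (0 < M ^ n)%N ->
  Dn b = gset R (M ^ n) (ptK (M ^ n) (fun j => ~~ kept b j)) (fun j => ~~ kept b j).
Proof. by move=> hN; rewrite /Dn Kn_Uc closure_Uc // Uc_gset. Qed.

Lemma sum_inv (R : realType) N : (0 < N)%N -> \sum_(i < N) (N%:R : R)^-1 = 1.
Proof.
move=> hN; rewrite sumr_const card_ord -[_ *+ N]mulr_natr mulVf //.
by rewrite pnatr_eq0 -lt0n.
Qed.

Lemma PW1 (R : realType) n M (b : config n M) : (0 < M ^ n)%N ->
  V1 (Dn b : set R) = 1 - V1 (Kn b : set R).
Proof.
move=> hN; rewrite DE // KE // !V1_gset //.
rewrite (eq_bigr (fun i : 'I_(M ^ n) => (M ^ n)%:R^-1 - (kept b i)%:R / (M ^ n)%:R)).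
  by rewrite sumrB sum_inv.
by move=> i _; case: (kept b i) => /=; ring.
Qed.

Lemma PW2 (R : realType) n M (b1 b2 : config n M) : (0 < M ^ n)%N ->
  V1 (Dn b1 `&` Dn b2 : set R) =
  1 - V1 (Kn b1 : set R) - V1 (Kn b2 : set R) + V1 (Kn b1 `&` Kn b2 : set R).
Proof.
move=> hN; rewrite !DE // !KE // !gsetI // !V1_gset //.
rewrite (eq_bigr (fun i : 'I_(M ^ n) => (M ^ n)%:R^-1 - (kept b1 i)%:R / (M ^ n)%:R
   - (kept b2 i)%:R / (M ^ n)%:R + (kept b1 i && kept b2 i)%:R / (M ^ n)%:R)).
  by rewrite big_split /= !sumrB sum_inv.
by move=> i _; case: (kept b1 i); case: (kept b2 i) => /=; ring.
Qed.

Lemma PW3 (R : realType) n M (b : config n M) : (0 < M ^ n)%N ->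
  ((V0 (Dn b : set R))%:R : R) = (V0 (Kn b : set R))%:R + 1
     - (kept b 0%N)%:R - (kept b (M ^ n).-1)%:R.
Proof.
move=> hN; rewrite DE // KE // !V0_gset //; try exact: gclosedK.
exact: I3.
Qed.

Lemma PW4 (R : realType) n M (b1 b2 : config n M) : (0 < M ^ n)%N ->
  ((V0 (Dn b1 `&` Dn b2 : set R))%:R : R) =
  (V0 (Kn b1 : set R))%:R + (V0 (Kn b2 : set R))%:R
  - (V0 (Kn b1 `&` Kn b2 : set R))%:R + (Niso (Kn b1 `&` Kn b2 : set R))%:R
  + 1 - (kept b1 0%N)%:R - (kept b2 0%N)%:R
  - (kept b1 (M ^ n).-1)%:R - (kept b2 (M ^ n).-1)%:R
  + (kept b1 0%N)%:R * (kept b2 0%N)%:R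
  + (kept b1 (M ^ n).-1)%:R * (kept b2 (M ^ n).-1)%:R.
Proof.
move=> hN; rewrite !DE // !KE // !gsetI // !V0_gset ?Niso_gset //;
  try (apply: gclosedI; exact: gclosedK); try exact: gclosedK.
rewrite -!natrM !mulnb.
exact: I4.
Qed.

Lemma lin1 (R : realType) n M (p : R) (f : config n M -> R) (h : config n M -> config n M -> R) :
  Exp2 p (fun b1 b2 => 1 - f b1 - f b2 + h b1 b2) = 1 - 2 * Exp p f + Exp2 p h.
Proof.
rewrite Exp2D.
rewrite Exp2B.
rewrite Exp2B Exp2C Exp2l Exp2r; ring.
Qed.

Lemma lin2 (R : realType) n M (p : R) (F A C : config n M -> R)
  (G H : config n M -> config n M -> R) :
  Exp2 p (fun b1 b2 => F b1 + F b2 - G b1 b2 + H b1 b2 + 1 - A b1 - A b2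
     - C b1 - C b2 + A b1 * A b2 + C b1 * C b2) =
  2 * Exp p F - Exp2 p G + Exp2 p H + 1 - 2 * Exp p A - 2 * Exp p C
  + Exp p A * Exp p A + Exp p C * Exp p C.
Proof.
rewrite Exp2D. rewrite Exp2D. rewrite Exp2B. rewrite Exp2B. rewrite Exp2B. rewrite Exp2B.
rewrite Exp2D. rewrite Exp2D. rewrite Exp2B. rewrite Exp2D.
rewrite Exp2C !Exp2l !Exp2r !Exp2M; ring.
Qed.

Lemma lin3 (R : realType) n M (p : R) (f : config n M -> R) :
  Exp p (fun b => 1 - f b) = 1 - Exp p f.
Proof. by rewrite ExpB ExpC. Qed.

Lemma lin4 (R : realType) n M (p : R) (f g k : config n M -> R) :
  Exp p (fun b => f b + 1 - g b - k b) = Exp p f + 1 - Exp p g - Exp p k.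
Proof. by rewrite ExpB ExpB ExpD ExpC. Qed.

Theorem corollary5p6 (R : realType) (M n : nat) (p : R) :
  (2 <= M)%N -> 0 < p <= 1 ->
  [/\ Exp2 p (fun b1 b2 : config n M => V1 (Dn b1 `&` Dn b2))
        = 1 - 2 * Exp p (fun b : config n M => V1 (Kn b))
          + Exp2 p (fun b1 b2 : config n M => V1 (Kn b1 `&` Kn b2)),
      Exp2 p (fun b1 b2 : config n M => (V0 (R:=R) (Dn b1 `&` Dn b2))%:R)
        = 2 * Exp p (fun b : config n M => (V0 (R:=R) (Kn b))%:R)
          - Exp2 p (fun b1 b2 : config n M => (V0 (R:=R) (Kn b1 `&` Kn b2))%:R)
          + Exp2 p (fun b1 b2 : config n M => (Niso (R:=R) (Kn b1 `&` Kn b2))%:R)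
          + 1 - 4 * p ^+ n + 2 * p ^+ (2 * n),
      Exp p (fun b : config n M => V1 (Dn b))
        = 1 - Exp p (fun b : config n M => V1 (Kn b))
    & Exp p (fun b : config n M => (V0 (R:=R) (Dn b))%:R)
        = Exp p (fun b : config n M => (V0 (R:=R) (Kn b))%:R) + 1 - 2 * p ^+ n].
Proof.
move=> M2 _.
have M0 : (0 < M)%N by apply: leq_trans M2.
have hN : (0 < M ^ n)%N by rewrite expn_gt0 M0.
have hN1 : ((M ^ n).-1 < M ^ n)%N by rewrite prednK.
have E0 := @Exp_kept R n M p 0%N M0 hN.
have E1 := @Exp_kept R n M p (M ^ n).-1 M0 hN1.
split.
- transitivity (Exp2 p (fun b1 b2 : config n M =>
     1 - V1 (Kn b1 : set R) - V1 (Kn b2 : set R) + V1 (Kn b1 `&` Kn b2 : set R))).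
    by congr Exp2; apply/funext => b1; apply/funext => b2; rewrite PW2.
  exact: lin1.
- transitivity (Exp2 p (fun b1 b2 : config n M =>
     (V0 (Kn b1 : set R))%:R + (V0 (Kn b2 : set R))%:R
  - (V0 (Kn b1 `&` Kn b2 : set R))%:R + (Niso (Kn b1 `&` Kn b2 : set R))%:R
  + 1 - (kept b1 0%N)%:R - (kept b2 0%N)%:R
  - (kept b1 (M ^ n).-1)%:R - (kept b2 (M ^ n).-1)%:R
  + (kept b1 0%N)%:R * (kept b2 0%N)%:R
  + (kept b1 (M ^ n).-1)%:R * (kept b2 (M ^ n).-1)%:R)).
    by congr Exp2; apply/funext => b1; apply/funext => b2; rewrite PW4.
  have L := (@lin2 R n M p (fun b => (V0 (Kn b : set R))%:R) (fun b => (kept b 0%N)%:R)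
       (fun b => (kept b (M ^ n).-1)%:R)
       (fun b1 b2 => (V0 (Kn b1 `&` Kn b2 : set R))%:R)
       (fun b1 b2 => (Niso (Kn b1 `&` Kn b2 : set R))%:R)).
  cbv beta in L; rewrite L.
  rewrite E0 E1 mul2n -addnn exprD; ring.
- transitivity (Exp p (fun b : config n M => 1 - V1 (Kn b : set R))).
    by congr Exp; apply/funext => b; rewrite PW1.
  exact: lin3.
- transitivity (Exp p (fun b : config n M =>
     (V0 (Kn b : set R))%:R + 1 - (kept b 0%N)%:R - (kept b (M ^ n).-1)%:R)).
    by congr Exp; apply/funext => b; rewrite PW3.
  have L := (@lin4 R n M p (fun b => (V0 (Kn b : set R))%:R) (fun b => (kept b 0%N)%:R)
       (fun b => (kept b (M ^ n).-1)%:R)).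
  cbv beta in L; rewrite L.
  rewrite E0 E1; ring.
Qed.
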